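(* Let $(B,\lfloor\cdot,\cdot\rfloor)$ be an SSD space with quadratic form $q$ and let $f:B\to\mathbb{R}\cup\{+\infty\}$ be a $w(B,B)$-lower semicontinuous proper convex function with $G_f\neq\emptyset$. Then $G_f$ is $q$-representable.
   Context: An SSD space is a pair $(B,\lfloor\cdot,\cdot\rfloor)$ with $B$ a nonzero real vector space and $\lfloor\cdot,\cdot\rfloor$ a symmetric bilinear form; $q(b)=\frac12\lfloor b,b\rfloor$. $w(B,B)$ is the coarsest topology on $B$ making all maps $b\mapsto\lfloor b,c\rfloor$ continuous. $f^{@}(b)=\sup_{c\in B}\{\lfloor c,b\rfloor-f(c)\}$, $\mathcal{P}_q(g)=\{b: g(b)=q(b)\}$, $G_f=\{b\in B: f(b)+f^{@}(b)=\lfloor b,b\rfloor\}$. A nonempty $A\subset B$ is $q$-positive if $q(b-c)\ge0$ for all $b,c\in A$; a $q$-positive set $A$ is $q$-representable if there exists a $w(B,B)$-lsc proper convex $g:B\to\mathbb{R}\cup\{+\infty\}$ with $g\ge q$ on $B$ and $\mathcal{P}_q(g)=A$. *)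

(* Defs.v *)
From HB Require Import structures.
From mathcomp Require Import all_boot all_order all_algebra.
From mathcomp Require Import all_classical all_reals all_analysis.
Set Implicit Arguments. Unset Strict Implicit. Unset Printing Implicit Defensive.
Import Order.TTheory GRing.Theory Num.Theory.
Local Open Scope classical_set_scope.
Local Open Scope ring_scope.

Import numFieldNormedType.Exports.
Section SSD.
Context {R : realType} {B : lmodType R}.
Variable bf : B -> B -> R.

Definition SSD_space : Prop :=
  [/\ exists b : B, b != 0,
      (forall b c : B, bf b c = bf c b) &
      (forall (t : R) (a b c : B), bf (t *: a + b) c = t * bf a c + bf b c)].

Definition qf (b : B) : R := bf b b / 2.

(* w(B,B): the coarsest topology on B making every b |-> [b,c] continuous,
   i.e. the supremum of the initial topologies of the maps b |-> [b,c]. *)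
Definition wBB : Type :=
  sup_topology (fun c : B => Topological.on (initial_topology (fun b : B => bf b c))).

Local Open Scope ereal_scope.

Definition w_lsc (f : B -> \bar R) : Prop :=
  @lower_semicontinuous wBB R f.

(* f : B -> R \cup {+oo} (never -oo), not identically +oo *)
Definition proper_fun (f : B -> \bar R) : Prop :=
  (forall b, f b != -oo) /\ (exists b, f b != +oo).

Definition convex_fun (f : B -> \bar R) : Prop :=
  forall (x y : B) (t : R), (0 < t < 1)%R ->
    f (t *: x + (1 - t) *: y)%R <= (t%:E * f x + (1 - t)%R%:E * f y).

Definition fat (f : B -> \bar R) (b : B) : \bar R :=
  ereal_sup [set (bf c b)%:E - f c | c in [set: B]].

Definition Gf (f : B -> \bar R) : set B :=
  [set b | f b + fat f b = (bf b b)%:E].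

Definition Pq (g : B -> \bar R) : set B :=
  [set b | g b = (qf b)%:E].

Definition q_positive (A : set B) : Prop :=
  A !=set0 /\ (forall b c, A b -> A c -> (0 <= qf (b - c))%R).

Definition q_representable (A : set B) : Prop :=
  q_positive A /\
  exists g : B -> \bar R,
    [/\ w_lsc g, proper_fun g, convex_fun g,
        (forall b, (qf b)%:E <= g b) & Pq g = A].

End SSD.

(* Main.v *)
Require Import Defs.
From HB Require Import structures.
From mathcomp Require Import all_boot all_order all_algebra.
From mathcomp Require Import all_classical all_reals all_analysis.
From mathcomp Require Import ring lra.
Set Implicit Arguments. Unset Strict Implicit. Unset Printing Implicit Defensive.
Import Order.TTheory GRing.Theory Num.Theory.
Local Open Scope classical_set_scope.
Local Open Scope ring_scope.
Import numFieldNormedType.Exports.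

Lemma wBB_nbhs (R : realType) (B : lmodType R) (bf : B -> B -> R) (c x : B) (a : R) :
  a < bf x c -> @nbhs (wBB bf) (wBB bf) x [set y | a < bf y c].
Proof.
move=> ax.
have H := (@cvg_sup B B (fun c : B => Topological.on (initial_topology (fun b : B => bf b c))) (@nbhs (wBB bf) (wBB bf) x) x _).1 (@cvg_refl _ _) c.
have hc := @initial_continuous B R (fun b : B => bf b c) x.
have N : nbhs (bf x c) [set r : R | a < r].
  by apply: open_nbhs_nbhs; split; [exact: open_gt| exact: ax].
have := hc _ N.
move=> N2. have h := H _ _ N2. apply: h. exact: (@nbhs_filter (wBB bf) x).
Qed.

Local Open Scope ereal_scope.

Lemma ecase (R : realType) (e : \bar R) : e != -oo -> e = +oo \/ exists r, e = r%:E.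
Proof. by case: e => [r| |] // _; [right; exists r|left]. Qed.

Lemma halfsum (R : realType) (a1 a2 : R) (e1 e2 : \bar R) :
  a1%:E < e1 -> a2%:E < e2 -> ((a1 + a2) / 2)%:E < (e1 + e2) * (2^-1)%:E.
Proof.
case: e1 => [r1| |] //; case: e2 => [r2| |] //.
- rewrite !lte_fin => h1 h2; lra.
- by move=> _ _; rewrite addey // gt0_mulye ?lte_fin ?ltry // invr_gt0.
- by move=> _ _; rewrite addye // gt0_mulye ?lte_fin ?ltry // invr_gt0.
- by move=> _ _; rewrite addye // gt0_mulye ?lte_fin ?ltry // invr_gt0.
Qed.

Lemma splitlt (R : realType) (a : R) (e1 e2 : \bar R) :
  e1 != -oo -> e2 != -oo -> a%:E < (e1 + e2) * (2^-1)%:E ->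
  exists a1 a2 : R, [/\ a1%:E < e1, a2%:E < e2 & (a = (a1 + a2) / 2)%R].
Proof.
case: e1 => [r1| |] //; case: e2 => [r2| |] // _ _.
- rewrite -EFinD -EFinM lte_fin => h.
  exists (a + (r1 - r2) / 2)%R, (a - (r1 - r2) / 2)%R; split; rewrite ?lte_fin; lra.
- move=> _; exists (r1 - 1)%R, (2 * a - r1 + 1)%R; split; rewrite ?lte_fin ?ltry //; lra.
- move=> _; exists (2 * a - r2 + 1)%R, (r2 - 1)%R; split; rewrite ?lte_fin ?ltry //; lra.
- move=> _; exists a, a; split; rewrite ?ltry //; lra.
Qed.

Theorem mainTheorem10 (R : realType) (B : lmodType R) (bf : B -> B -> R)
  (f : B -> \bar R) :
  SSD_space bf ->
  w_lsc bf f -> proper_fun f -> convex_fun f ->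
  Gf bf f !=set0 ->
  q_representable bf (Gf bf f).
Proof.
move=> [_ sym lin] lscf [fnoo [c0 fc0]] cvf [b1 Gb1].
have bf0 : forall c, bf 0%R c = 0%R.
  move=> c; have := lin 1%R 0%R 0%R c; rewrite scale1r !addr0 mul1r; lra.
have scl : forall s a c, bf (s *: a)%R c = (s * bf a c)%R.
  by move=> s a c; have := lin s a 0%R c; rewrite !addr0 bf0 addr0.
have subl : forall b c d, bf (b - c)%R d = (bf b d - bf c d)%R.
  move=> b c d; have := lin (-1)%R c b d; rewrite scaleN1r addrC => ->; lra.
have lin2 : forall t s x y c, bf c (t *: x + s *: y)%R = (t * bf c x + s * bf c y)%R.
  by move=> t s x y c; rewrite sym lin scl (sym x) (sym y).
set F := fat bf f.
have [r0 fc0E] : exists r0, f c0 = r0%:E.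
  by case: (ecase (fnoo c0)) fc0 => [->|//]; rewrite eqxx.
have Fsup : forall b c, (bf c b)%:E - f c <= F b.
  by move=> b c; apply: ereal_sup_ubound; exists c.
have FnNy : forall b, F b != -oo.
  move=> b; have := Fsup b c0; rewrite fc0E.
  by case: (F b) => // /=; rewrite leeNy_eq.
have FY : forall b c, (bf c b)%:E <= f c + F b.
  move=> b c; case: (ecase (fnoo c)) => [->|[r fE]].
    by rewrite addye ?leey.
  have := Fsup b c; rewrite fE.
  case: (ecase (FnNy b)) => [->|[s ->]]; first by rewrite addey ?leey.
  by rewrite -EFinB -EFinD !lee_fin; lra.
have hcase : forall b, f b + F b = +oo \/ exists r s, f b = r%:E /\ F b = s%:E.
  move=> b; case: (ecase (fnoo b)) => [->|[r ->]]; first by left; rewrite addye.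
  case: (ecase (FnNy b)) => [->|[s ->]]; first by left.
  by right; exists r, s.
pose g b := (f b + F b) * (2^-1)%:E.
have h2 : (0 < (2^-1)%:E :> \bar R) by rewrite lte_fin invr_gt0.
have goo : forall b, f b + F b = +oo -> g b = +oo.
  by move=> b E; rewrite /g E gt0_mulye.
have Fconv : forall x y t, (0 < t < 1)%R ->
    F (t *: x + (1 - t) *: y)%R <= t%:E * F x + (1 - t)%:E * F y.
  move=> x y t /andP[t0 t1].
  have t0E : (0 < t%:E :> \bar R) by rewrite lte_fin.
  have t1E : (0 < (1 - t)%:E :> \bar R) by rewrite lte_fin subr_gt0.
  case: (ecase (FnNy x)) => [->|[u Fx]].
    rewrite gt0_muley // addye ?leey //.
    case: (ecase (FnNy y)) => [->|[v ->]]; first by rewrite gt0_muley.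
    by rewrite -EFinM.
  case: (ecase (FnNy y)) => [->|[v Fy]].
    by rewrite gt0_muley // Fx -EFinM addey ?leey.
  rewrite Fx Fy -!EFinM -EFinD.
  apply: ge_ereal_sup => e [c _ <-].
  case: (ecase (fnoo c)) => [->|[r fE]]; first by rewrite /= addeNy leNye.
  have := Fsup x c; have := Fsup y c; rewrite fE Fx Fy lin2.
  rewrite -!EFinB !lee_fin => hy hx; nra.
have hfin : forall b e, f b + F b = e%:E -> exists r s, [/\ f b = r%:E, F b = s%:E & (r + s = e)%R].
  move=> b e; case: (hcase b) => [->//|[r [s [E1 E2]]]].
  by rewrite E1 E2 => -[E]; exists r, s.
split.
  split; first by exists b1.
  move=> b c Gb Gc.
  have [rb [sb [fb Fb Eb]]] := hfin _ _ Gb.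
  have [rc [sc [fc Fc Ec]]] := hfin _ _ Gc.
  have := FY c b; have := FY b c; rewrite fb Fb fc Fc -!EFinD !lee_fin => e1 e2.
  rewrite /qf subl !(sym _ (b - c)%R) !subl (sym b c).
  rewrite (sym b c) in e2; lra.
exists g; split.
- move=> x a.
  have Flsc : forall x a, a%:E < F x -> @nbhs (wBB bf) (wBB bf) x [set y | a%:E < F y].
    move=> z a' /ereal_sup_gt [e [c _ <-]].
    case: (ecase (fnoo c)) => [->|[r fE]]; first by rewrite /= addeNy.
    rewrite fE -EFinB lte_fin => h.
    have : (a' + r < bf z c)%R by rewrite sym; lra.
    have FF := @nbhs_filter (wBB bf) z.
    move/wBB_nbhs; apply: filterS => y /= hy.
    apply: lt_le_trans (Fsup y c); rewrite fE -EFinB lte_fin sym; lra.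
  move=> hx; have [a1 [a2 [h1 h2' ->]]] := splitlt (fnoo x) (FnNy x) hx.
  have [V NV HV] := lscf x a1 h1.
  exists (V `&` [set y | a2%:E < F y]).
    by apply: filterI => //; exact: Flsc.
  by move=> y [/HV hy hy']; exact: halfsum.
- split.
    move=> b; case: (hcase b) => [/goo ->//|[r [s [fb Fb]]]].
    by rewrite /g fb Fb -EFinD -EFinM.
  exists b1; have [r [s [E1 E2 _]]] := hfin _ _ Gb1.
  by rewrite /g E1 E2 -EFinD -EFinM.
- move=> x y t ht; have /andP[t0 t1] := ht.
  have t0E : (0 < t%:E :> \bar R) by rewrite lte_fin.
  have t1E : (0 < (1 - t)%:E :> \bar R) by rewrite lte_fin subr_gt0.
  have gnNy : forall b, g b != -oo.
    by move=> b; case: (hcase b) => [/goo ->//|[r [s [fb Fb]]]]; rewrite /g fb Fb -EFinD -EFinM.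
  case: (hcase x) => [/goo gx|[r1 [s1 [fx Fx]]]].
    rewrite gx gt0_muley // addye ?leey //.
    case: (hcase y) => [/goo ->|[r2 [s2 [fy Fy]]]]; first by rewrite gt0_muley.
    by rewrite /g fy Fy -EFinD -!EFinM.
  case: (hcase y) => [/goo gy|[r2 [s2 [fy Fy]]]].
    by rewrite gy gt0_muley // /g fx Fx -EFinD -!EFinM addey ?leey.
  have hf := cvf x y t ht; have hF := Fconv x y t ht.
  rewrite fx fy Fx Fy -!EFinM -EFinD in hf hF.
  set z := (t *: x + (1 - t) *: y)%R in hf hF *.
  case: (ecase (fnoo z)) hf => [->|[p fz]]; first by rewrite leye_eq.
  rewrite fz; case: (ecase (FnNy z)) hF => [->|[q Fz]]; first by rewrite leye_eq.
  rewrite Fz /g fz Fz fx Fx fy Fy -!EFinD -!EFinM -?EFinD => hq hp.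
  move: hq hp; rewrite -?EFinD !lee_fin => hq hp.
  nra.
- move=> b; case: (hcase b) => [/goo ->|[r [s [fb Fb]]]]; first exact: leey.
  have := FY b b; rewrite /g /qf fb Fb -!EFinD -EFinM !lee_fin; lra.
- apply/seteqP; split => b /=; rewrite /Pq /Gf /= -/F.
    case: (hcase b) => [E|[r [s [fb Fb]]]]; first by rewrite goo.
    by rewrite /g fb Fb -!EFinD -EFinM /qf => -[E]; congr EFin; lra.
  move=> /hfin [r [s [fb Fb E]]].
  by rewrite /g fb Fb -!EFinD -EFinM /qf; congr EFin; lra.
Qed.
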